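(* Let $d\in\{2,3\}$ and let $|\mu\rangle,|\lambda\rangle,|\bar\mu\rangle,|\bar\lambda\rangle\in\mathbb{C}^d\otimes\mathbb{C}^d$ be normalized states of full Schmidt rank $d$. If $|\mu\rangle\otimes|\lambda\rangle$ can be transformed into $|\bar\mu\rangle\otimes|\bar\lambda\rangle$ by a local unitary, then either ($|\bar\mu\rangle$ is LU-equivalent to $|\mu\rangle$ and $|\bar\lambda\rangle$ is LU-equivalent to $|\lambda\rangle$) or ($|\bar\mu\rangle$ is LU-equivalent to $|\lambda\rangle$ and $|\bar\lambda\rangle$ is LU-equivalent to $|\mu\rangle$).
   Context: The state $|\mu\rangle\otimes|\lambda\rangle$ is regarded as a bipartite state between two parties, each holding two $d$-dimensional subsystems. A local unitary is $U_A\otimes U_B$ with $U_A,U_B\in\mathrm{U}(d^2)$. Two bipartite states are LU-equivalent if and only if their tuples of squared Schmidt coefficients coincide up to reordering. *)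

(* Defs.v *)
From HB Require Import structures.
From mathcomp Require Import all_boot all_order all_algebra.
From mathcomp Require Import reals.
From mathcomp.real_closed Require Import complex mxtens.
Set Implicit Arguments. Unset Strict Implicit. Unset Printing Implicit Defensive.
Import Order.TTheory GRing.Theory Num.Theory.
Local Open Scope ring_scope.

(* A pure state |psi> = sum_{i,j} psi i j |i>|j> in C^m (x) C^n, represented
   by its m x n coefficient matrix; C = R[i] with R the real numbers. *)

Definition adjmx (C : numClosedFieldType) m n (A : 'M[C]_(m, n)) : 'M[C]_(n, m) :=
  (map_mx Num.conj A)^T.

Definition unitary (C : numClosedFieldType) n (U : 'M[C]_n) : Prop :=
  U *m adjmx U = 1%:M.

Definition normalized (C : numClosedFieldType) m n (psi : 'M[C]_(m, n)) : Prop :=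
  \sum_i \sum_j `|psi i j| ^+ 2 = 1.

Definition schmidt_rank (C : numClosedFieldType) m n (psi : 'M[C]_(m, n)) : nat :=
  \rank psi.

(* (U_A (x) U_B) |psi> has coefficient matrix U_A *m psi *m U_B^T *)
Definition LU_equiv (C : numClosedFieldType) m n (psi phi : 'M[C]_(m, n)) : Prop :=
  exists (UA : 'M[C]_m) (UB : 'M[C]_n),
    unitary UA /\ unitary UB /\ phi = UA *m psi *m UB^T.

(* |mu> (x) |lambda> viewed as a bipartite state between party A (holding the
   first factors of both) and party B (holding the second factors): its
   coefficient matrix is the Kronecker product. *)
Definition tens_state (C : numClosedFieldType) d (mu lam : 'M[C]_d) : 'M[C]_(d * d) :=
  mu *t lam.

(* Main.v *)
Require Import Defs.
From HB Require Import structures.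
From mathcomp Require Import all_boot all_order all_algebra.
From mathcomp Require Import reals.
From mathcomp.real_closed Require Import complex mxtens.
From mathcomp Require Import all_fingroup.
From mathcomp Require Import ring lra.
Set Implicit Arguments. Unset Strict Implicit. Unset Printing Implicit Defensive.
Import Order.TTheory GRing.Theory Num.Theory.
Local Open Scope ring_scope.
Set Implicit Arguments. Unset Strict Implicit. Unset Printing Implicit Defensive.
Import Order.TTheory GRing.Theory Num.Theory.
Local Open Scope ring_scope.

Lemma alg3 (R : realFieldType) (a0 b0 c0 e0 p q r s q' s' : R) :
  0 < a0 -> 0 < b0 -> 0 < c0 -> 0 < e0 -> 1 <= p -> p <= q -> 1 <= r -> r <= s ->
  p <= q' -> r <= s' ->
  q * s = q' * s' ->
  (1+p+q)*(1+r+s) = (1+p+q')*(1+r+s') ->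
  (1+p^+2+q^+2)*(1+r^+2+s^+2) = (1+p^+2+q'^+2)*(1+r^+2+s'^+2) ->
  a0 * (1+p+q) = 1 -> b0 * (1+r+s) = 1 -> c0 * (1+p+q') = 1 -> e0 * (1+r+s') = 1 ->
  (a0 = c0 /\ p * a0 = p * c0 /\ q * a0 = q' * c0 /\ b0 = e0 /\ r * b0 = r * e0 /\ s * b0 = s' * e0) \/
  (a0 = e0 /\ p * a0 = r * e0 /\ q * a0 = s' * e0 /\ b0 = c0 /\ r * b0 = p * c0 /\ s * b0 = q' * c0).
Proof.
move=> ha0 hb0 hc0 he0 p1 q1 r1 s1 q1' s1' eqs EQ1 EQ2 SA SB SC SE.
have [eq|neq] := eqVneq q q'.
  subst q'.
  have es : s = s' by apply: (mulfI (x := q)); [rewrite gt_eqF //; lra | exact: eqs].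
  subst s'.
  have ea : a0 = c0.
    apply: (mulIf (x := 1+p+q)); first by rewrite gt_eqF //; lra.
    by rewrite SA SC.
  have eb : b0 = e0.
    apply: (mulIf (x := 1+r+s)); first by rewrite gt_eqF //; lra.
    by rewrite SB SE.
  by subst; left.
have E1 : (1+p)*s + (1+r)*q = (1+p)*s' + (1+r)*q' by lra.
have eqs2 : q^+2 * s^+2 = q'^+2 * s'^+2 by rewrite -!exprMn eqs.
have E2' : (1+p^+2)*s^+2 + (1+r^+2)*q^+2 = (1+p^+2)*s'^+2 + (1+r^+2)*q'^+2 by lra.
have F1 : (1+p)*s = (1+r)*q'.
  have : ((1+p)*s - (1+r)*q') * (q' - q) = 0.
    rewrite (_ : _ * _ = q' * ((1+p)*s + (1+r)*q - ((1+p)*s' + (1+r)*q'))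
                         + (1+p)*(q'*s' - q*s)); last by ring.
    by rewrite E1 eqs !subrr !mulr0 ?addr0.
  move/eqP; rewrite mulf_eq0 subr_eq0 (negbTE (_ : q' - q != 0)) ?orbF; first by move/eqP.
  by rewrite subr_eq0 eq_sym.
have F2 : (1+p^+2)*s^+2 = (1+r^+2)*q'^+2.
  have : ((1+p^+2)*s^+2 - (1+r^+2)*q'^+2) * (q'^+2 - q^+2) = 0.
    rewrite (_ : _ * _ = q'^+2 * ((1+p^+2)*s^+2 + (1+r^+2)*q^+2 - ((1+p^+2)*s'^+2 + (1+r^+2)*q'^+2))
                         + (1+p^+2)*(q'^+2*s'^+2 - q^+2*s^+2)); last by ring.
    by rewrite E2' eqs2 !subrr !mulr0 ?addr0.
  move/eqP; rewrite mulf_eq0 subr_eq0 (negbTE (_ : q'^+2 - q^+2 != 0)) ?orbF; first by move/eqP.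
  rewrite subr_eq0 eqrXn2 //; try lra.
have G : (p - r) * (1 - p * r) * s^+2 = 0.
  have -> : (p - r) * (1 - p * r) * s^+2 = ((1+r^+2) * ((1+p)*s)^+2 - (1+r)^+2 * ((1+p^+2)*s^+2)) / 2.
    by field.
  by rewrite F1 F2; field.
have epr : p = r.
  move: G => /eqP; rewrite mulf_eq0 sqrf_eq0 (gt_eqF (_ : 0 < s)) ?orbF; last by lra.
 
  rewrite mulf_eq0.
  case/orP; rewrite subr_eq0; first by move/eqP.
  by move/eqP => h; nra.
subst r.
have eq' : q' = s.
  apply: (mulfI (x := 1+p)); first by rewrite gt_eqF //; lra.
  by rewrite F1.
subst q'.
have es' : s' = q.
  apply: (mulfI (x := s)); first by rewrite gt_eqF //; lra.
  by rewrite -eqs mulrC.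
subst s'.
have ea : a0 = e0.
  apply: (mulIf (x := 1+p+q)); first by rewrite gt_eqF //; lra.
  by rewrite SA SE.
have eb : b0 = c0.
  apply: (mulIf (x := 1+p+s)); first by rewrite gt_eqF //; lra.
  by rewrite SB SC.
by subst; right.
Qed.

Section Core.
Variable R : realFieldType.
Implicit Types x y : R.

Lemma perm_min (L1 L2 : seq R) x y : perm_eq L1 L2 -> x \in L1 -> y \in L2 ->
  all (fun z => x <= z) L1 -> all (fun z => y <= z) L2 -> x = y.
Proof.
move=> pL xL yL /allP h1 /allP h2.
have xL2 : x \in L2 by rewrite -(perm_mem pL).
have yL1 : y \in L1 by rewrite (perm_mem pL).
by apply/eqP; rewrite eq_le h1 // h2.
Qed.

Lemma perm_max (L1 L2 : seq R) x y : perm_eq L1 L2 -> x \in L1 -> y \in L2 ->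
  all (fun z => z <= x) L1 -> all (fun z => z <= y) L2 -> x = y.
Proof.
move=> pL xL yL /allP h1 /allP h2.
have xL2 : x \in L2 by rewrite -(perm_mem pL).
have yL1 : y \in L1 by rewrite (perm_mem pL).
by apply/eqP; rewrite eq_le h1 // h2.
Qed.

Lemma mono x1 x2 y1 y2 : 0 < x1 -> x1 <= x2 -> 0 < y1 -> y1 <= y2 -> x1 * y1 <= x2 * y2.
Proof. by move=> *; apply: ler_pM => //; apply: ltW. Qed.

Ltac sle := solve [assumption | apply: lexx].
Ltac lemul Hw := solve [ apply: mono; sle
  | apply: le_trans Hw _; apply: mono; sle ].
Ltac allmul Hw := rewrite /= ?andbT; repeat (apply/andP; split); try lemul Hw; try done.

Lemma core3_wlog (a0 a1 a2 b0 b1 b2 c0 c1 c2 e0 e1 e2 : R) :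
  0 < a0 -> a0 <= a1 -> a1 <= a2 ->
  0 < b0 -> b0 <= b1 -> b1 <= b2 ->
  0 < c0 -> c0 <= c1 -> c1 <= c2 ->
  0 < e0 -> e0 <= e1 -> e1 <= e2 ->
  a0 + a1 + a2 = 1 -> b0 + b1 + b2 = 1 -> c0 + c1 + c2 = 1 -> e0 + e1 + e2 = 1 ->
  a1 * b0 <= a0 * b1 -> c1 * e0 <= c0 * e1 ->
  perm_eq [:: a0*b0; a0*b1; a0*b2; a1*b0; a1*b1; a1*b2; a2*b0; a2*b1; a2*b2]
          [:: c0*e0; c0*e1; c0*e2; c1*e0; c1*e1; c1*e2; c2*e0; c2*e1; c2*e2] ->
  (a0 = c0 /\ a1 = c1 /\ a2 = c2 /\ b0 = e0 /\ b1 = e1 /\ b2 = e2) \/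
  (a0 = e0 /\ a1 = e1 /\ a2 = e2 /\ b0 = c0 /\ b1 = c1 /\ b2 = c2).
Proof.
move=> ha0 ha1 ha2 hb0 hb1 hb2 hc0 hc1 hc2 he0 he1 he2 sa sb sc se Hw Hw' pL.
have pa1 : 0 < a1 by lra. have pa2 : 0 < a2 by lra. have a02 : a0 <= a2 by lra.
have pb1 : 0 < b1 by lra. have pb2 : 0 < b2 by lra. have b02 : b0 <= b2 by lra.
have pc1 : 0 < c1 by lra. have pc2 : 0 < c2 by lra. have c02 : c0 <= c2 by lra.
have pe1 : 0 < e1 by lra. have pe2 : 0 < e2 by lra. have e02 : e0 <= e2 by lra.
have Hm : a0 * b0 = c0 * e0.
  apply: (perm_min pL); rewrite ?inE ?eqxx //; [allmul Hw | allmul Hw'].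
have Hs : a1 * b0 = c1 * e0.
  move: pL; rewrite -Hm perm_cons => pL'.
  apply: (perm_min pL'); rewrite ?inE ?eqxx ?orbT //; [allmul Hw | allmul Hw'].
have HM : a2 * b2 = c2 * e2.
  apply: (perm_max pL); rewrite ?inE ?eqxx ?orbT //; [allmul Hw | allmul Hw'].
have ex_r : forall x y : R, 0 < y -> exists p, x = p * y.
  by move=> x y y0; exists (x / y); rewrite divfK // gt_eqF.
have [p Ep] := ex_r a1 a0 ha0; have [q Eq] := ex_r a2 a0 ha0.
have [r Er] := ex_r b1 b0 hb0; have [s Es] := ex_r b2 b0 hb0.
have [p' Ep'] := ex_r c1 c0 hc0; have [q' Eq'] := ex_r c2 c0 hc0.
have [r' Er'] := ex_r e1 e0 he0; have [s' Es'] := ex_r e2 e0 he0.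
subst a1 a2 b1 b2 c1 c2 e1 e2.
have k0 : 0 < a0 * b0 by apply: mulr_gt0.
have kn0 : a0 * b0 != 0 by rewrite gt_eqF.
have p1 : 1 <= p by rewrite -(ler_pM2r ha0) mul1r.
have q1 : p <= q by rewrite -(ler_pM2r ha0).
have r1 : 1 <= r by rewrite -(ler_pM2r hb0) mul1r.
have s1 : r <= s by rewrite -(ler_pM2r hb0).
have p1' : 1 <= p' by rewrite -(ler_pM2r hc0) mul1r.
have q1' : p' <= q' by rewrite -(ler_pM2r hc0).
have r1' : 1 <= r' by rewrite -(ler_pM2r he0) mul1r.
have s1' : r' <= s' by rewrite -(ler_pM2r he0).
have epp : p = p'.
  apply: (mulIf kn0); rewrite {2}Hm; lra.
subst p'.
have eqs : q * s = q' * s'.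
  apply: (mulIf kn0); rewrite {2}Hm; lra.
have Hprod : \prod_(z <- _) z = \prod_(z <- _) z := perm_big _ pL.
have Hsq : \sum_(z <- _) z ^+ 2 = \sum_(z <- _) z ^+ 2 := perm_big _ pL.
rewrite /= !big_cons !big_nil in Hprod Hsq.
have E : (p*q*r*s)^+3 * (a0*b0)^+9 = (p*q'*r'*s')^+3 * (c0*e0)^+9.
  by apply: (etrans _ (etrans Hprod _)); ring.
rewrite -Hm in E.
have EQ2 : (1+p^+2+q^+2)*(1+r^+2+s^+2) = (1+p^+2+q'^+2)*(1+r'^+2+s'^+2).
  apply: (mulIf (expf_neq0 2 kn0)); rewrite {2}Hm.
  by apply: (etrans _ (etrans Hsq _)); ring.
clear Hprod Hsq pL.
have pos4 : forall x y z w : R, 0 < x -> 0 < y -> 0 < z -> 0 < w -> 0 < x*y*z*w.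
  by move=> x y z w *; rewrite !mulr_gt0.
have E2 : p*q*r*s = p*q'*r'*s'.
  apply/eqP; rewrite -(@eqrXn2 _ 3) //; last 2 first.
  - by apply: ltW; apply: pos4; lra.
  - by apply: ltW; apply: pos4; lra.
  apply/eqP; apply: (mulIf (expf_neq0 9 kn0)); exact: E.
have er : r = r'.
  have nz : p * (q * s) != 0 by rewrite gt_eqF // !mulr_gt0 //; lra.
  apply: (mulfI nz); rewrite {2}eqs; lra.
subst r'.
have SA : a0 * (1+p+q) = 1 by rewrite -[X in _ = X]sa; ring.
have SB : b0 * (1+r+s) = 1 by rewrite -[X in _ = X]sb; ring.
have SC : c0 * (1+p+q') = 1 by rewrite -[X in _ = X]sc; ring.
have SE : e0 * (1+r+s') = 1 by rewrite -[X in _ = X]se; ring.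
have EQ1 : (1+p+q)*(1+r+s) = (1+p+q')*(1+r+s').
  apply: (mulIf kn0); rewrite {2}Hm.
  have -> : (1+p+q)*(1+r+s)*(a0*b0) = (a0 * (1+p+q)) * (b0*(1+r+s)) by ring.
  have -> : (1+p+q')*(1+r+s')*(c0*e0) = (c0 * (1+p+q')) * (e0*(1+r+s')) by ring.
  by rewrite SA SB SC SE.
by apply: alg3.
Qed.

Lemma core2_wlog (a0 a1 b0 b1 c0 c1 e0 e1 : R) :
  0 < a0 -> a0 <= a1 -> 0 < b0 -> b0 <= b1 -> 0 < c0 -> c0 <= c1 -> 0 < e0 -> e0 <= e1 ->
  a0 + a1 = 1 -> b0 + b1 = 1 -> c0 + c1 = 1 -> e0 + e1 = 1 ->
  a1 * b0 <= a0 * b1 -> c1 * e0 <= c0 * e1 ->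
  perm_eq [:: a0*b0; a0*b1; a1*b0; a1*b1] [:: c0*e0; c0*e1; c1*e0; c1*e1] ->
  (a0 = c0 /\ a1 = c1 /\ b0 = e0 /\ b1 = e1).
Proof.
move=> ha0 ha1 hb0 hb1 hc0 hc1 he0 he1 sa sb sc se Hw Hw' pL.
have pa1 : 0 < a1 by lra. have pb1 : 0 < b1 by lra.
have pc1 : 0 < c1 by lra. have pe1 : 0 < e1 by lra.
have Hm : a0 * b0 = c0 * e0.
  apply: (perm_min pL); rewrite ?inE ?eqxx //; [allmul Hw | allmul Hw'].
have Hs : a1 * b0 = c1 * e0.
  move: pL; rewrite -Hm perm_cons => pL'.
  apply: (perm_min pL'); rewrite ?inE ?eqxx ?orbT //; [allmul Hw | allmul Hw'].
have HM : a1 * b1 = c1 * e1.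
  apply: (perm_max pL); rewrite ?inE ?eqxx ?orbT //; [allmul Hw | allmul Hw'].
clear pL.
have ex_r : forall x y : R, 0 < y -> exists p, x = p * y.
  by move=> x y y0; exists (x / y); rewrite divfK // gt_eqF.
have [p Ep] := ex_r a1 a0 ha0; have [r Er] := ex_r b1 b0 hb0.
have [p' Ep'] := ex_r c1 c0 hc0; have [r' Er'] := ex_r e1 e0 he0.
subst a1 b1 c1 e1.
have k0 : 0 < a0 * b0 by apply: mulr_gt0.
have kn0 : a0 * b0 != 0 by rewrite gt_eqF.
have p1 : 1 <= p by rewrite -(ler_pM2r ha0) mul1r.
have r1 : 1 <= r by rewrite -(ler_pM2r hb0) mul1r.
have epp : p = p'.
  apply: (mulIf kn0); rewrite {2}Hm; lra.
subst p'.
have err : r = r'.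
  have nz : p * (a0 * b0) != 0 by rewrite mulf_neq0 // gt_eqF //; lra.
  apply: (mulfI nz); rewrite {2}Hm; lra.
subst r'.
have ea : a0 = c0.
  apply: (mulIf (x := 1+p)); first by rewrite gt_eqF //; lra.
  lra.
have eb : b0 = e0.
  apply: (mulIf (x := 1+r)); first by rewrite gt_eqF //; lra.
  lra.
by subst.
Qed.
End Core.

Lemma perm_allpairsC (F : fieldType) (a b : seq F) :
  perm_eq [seq x * y | x <- a, y <- b] [seq x * y | x <- b, y <- a].
Proof.
apply: prod_XsubC_eq; rewrite !big_allpairs_dep exchange_big /=.
by apply: eq_bigr => i _; apply: eq_bigr => j _; rewrite mulrC.
Qed.

Set Implicit Arguments. Unset Strict Implicit. Unset Printing Implicit Defensive.
Import Order.TTheory GRing.Theory Num.Theory.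
Local Open Scope ring_scope.

Lemma perm_sort2 (R : realFieldType) (s t : seq R) :
  perm_eq (sort <=%R s) (sort <=%R t) = perm_eq s t.
Proof. by rewrite perm_sort perm_sym perm_sort perm_sym. Qed.

Lemma core_seq (R : realFieldType) (d : nat) (hd : (d == 2)%N || (d == 3)%N)
  (a b c e : seq R) :
  size a = d -> size b = d -> size c = d -> size e = d ->
  all (fun x => 0 < x) a -> all (fun x => 0 < x) b ->
  all (fun x => 0 < x) c -> all (fun x => 0 < x) e ->
  \sum_(x <- a) x = 1 -> \sum_(x <- b) x = 1 ->
  \sum_(x <- c) x = 1 -> \sum_(x <- e) x = 1 ->
  perm_eq [seq x * y | x <- a, y <- b] [seq x * y | x <- c, y <- e] ->
  (perm_eq a c /\ perm_eq b e) \/ (perm_eq a e /\ perm_eq b c).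
Proof.
wlog: a b c e / [&& sorted <=%R a, sorted <=%R b, sorted <=%R c & sorted <=%R e].
  move=> H sa sb sc se pa pb pc pe Sa Sb Sc Se P.
  have ps : forall s : seq R, perm_eq (sort <=%R s) s by move=> s; apply/permEl/perm_sort.
  have := H (sort <=%R a) (sort <=%R b) (sort <=%R c) (sort <=%R e).
  rewrite !perm_sort2 !size_sort !sort_sorted; try exact: le_total.
  rewrite !(perm_all _ (ps _)) !(perm_big _ (ps _)).
  apply=> //.
  rewrite (permPl (perm_allpairs _ (ps a) (ps b))).
  by rewrite (permPr (perm_allpairs _ (ps c) (ps e))).
move=> /and4P[so_a so_b so_c so_e].
wlog: a b so_a so_b / nth 0 a 1 * nth 0 b 0 <= nth 0 a 0 * nth 0 b 1.
  move=> H sa sb sc se pa pb pc pe Sa Sb Sc Se P.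
  have [h|h] := leP (nth 0 a 1 * nth 0 b 0) (nth 0 a 0 * nth 0 b 1).
    exact: H.
  have := H b a so_b so_a; rewrite (mulrC (nth 0 b 1)) (mulrC (nth 0 b 0)) ltW //.
  move=> /(_ isT sb sa sc se pb pa pc pe Sb Sa Sc Se).
  case; [by rewrite (permPl (perm_allpairsC _ _))| by move=> [? ?]; right| by move=> [? ?]; left].
wlog: c e so_c so_e / nth 0 c 1 * nth 0 e 0 <= nth 0 c 0 * nth 0 e 1.
  move=> H Hw sa sb sc se pa pb pc pe Sa Sb Sc Se P.
  have [h|h] := leP (nth 0 c 1 * nth 0 e 0) (nth 0 c 0 * nth 0 e 1).
    exact: H.
  have := H e c so_e so_c; rewrite (mulrC (nth 0 e 1)) (mulrC (nth 0 e 0)) ltW //.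
  move=> /(_ isT Hw sa sb se sc pa pb pe pc Sa Sb Se Sc).
  case; [by rewrite (permPr (perm_allpairsC e c))| by move=> [? ?]; right| by move=> [? ?]; left].
move=> Hw' Hw.
case/orP: hd => /eqP ->.
  case: a so_a Hw => [|a0 [|a1 [|]]] //; case: b so_b => [|b0 [|b1 [|]]] //;
  case: c so_c Hw' => [|c0 [|c1 [|]]] //; case: e so_e => [|e0 [|e1 [|]]] //=.
  rewrite !andbT !big_cons !big_nil !addr0.
  move=> he1 hc1 Hw' hb1 ha1 Hw _ _ _ _ /andP[ha0 _] /andP[hb0 _]
    /andP[hc0 _] /andP[he0 _] sa sb sc se P.
  have [-> [-> [-> ->]]] := core2_wlog ha0 ha1 hb0 hb1 hc0 hc1 he0 he1 sa sb sc se Hw Hw' P.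
  by left.
case: a so_a Hw => [|a0 [|a1 [|a2 [|]]]] //; case: b so_b => [|b0 [|b1 [|b2 [|]]]] //;
case: c so_c Hw' => [|c0 [|c1 [|c2 [|]]]] //; case: e so_e => [|e0 [|e1 [|e2 [|]]]] //=.
rewrite !andbT !big_cons !big_nil !addr0 !addrA.
move=> /andP[he1 he2] /andP[hc1 hc2] Hw' /andP[hb1 hb2] /andP[ha1 ha2] Hw _ _ _ _
  /and3P[ha0 _ _] /and3P[hb0 _ _] /and3P[hc0 _ _] /and3P[he0 _ _] sa sb sc se P.
have [[-> [-> [-> [-> [-> ->]]]]]|[-> [-> [-> [-> [-> ->]]]]]] :=
  core3_wlog ha0 ha1 ha2 hb0 hb1 hb2 hc0 hc1 hc2 he0 he1 he2 sa sb sc se Hw Hw' P.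
  by left.
by right.
Qed.
Set Implicit Arguments. Unset Strict Implicit. Unset Printing Implicit Defensive.
Import Order.TTheory GRing.Theory Num.Theory.
Local Open Scope ring_scope.

Section Gen.
Variable C : numClosedFieldType.

Lemma adjmxE m n (A : 'M[C]_(m, n)) : adjmx A = map_mx Num.conj (A^T).
Proof. by rewrite /adjmx map_trmx. Qed.

Lemma adjmx_mul m n p (A : 'M[C]_(m, n)) (B : 'M[C]_(n, p)) :
  adjmx (A *m B) = adjmx B *m adjmx A.
Proof. by rewrite /adjmx map_mxM trmx_mul. Qed.

Lemma adjmxK m n (A : 'M[C]_(m, n)) : adjmx (adjmx A) = A.
Proof. by apply/matrixP => i j; rewrite !mxE conjCK. Qed.

Lemma adjmx_tr m n (A : 'M[C]_(m, n)) : adjmx (A^T) = (adjmx A)^T.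
Proof. by apply/matrixP => i j; rewrite !mxE. Qed.

Lemma adjmx_diag n (d : 'rV[C]_n) : adjmx (diag_mx d) = diag_mx (map_mx Num.conj d).
Proof. by rewrite /adjmx map_diag_mx tr_diag_mx. Qed.

Lemma adjmx_perm n (s : 'S_n) : adjmx (perm_mx s : 'M[C]_n) = perm_mx s^-1.
Proof. by rewrite /adjmx map_perm_mx tr_perm_mx. Qed.

Lemma unitaryP n (U : 'M[C]_n) : unitary U <-> U \is unitarymx.
Proof. by rewrite /unitary adjmxE; split => [h|/unitarymxP]; [apply/unitarymxP|]. Qed.

Lemma unitary_l n (U : 'M[C]_n) : unitary U -> adjmx U *m U = 1%:M.
Proof. by move=> /mulmx1C. Qed.

Lemma unitary_mul n (A B : 'M[C]_n) : unitary A -> unitary B -> unitary (A *m B).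
Proof.
move=> hA hB; rewrite /unitary adjmx_mul mulmxA -(mulmxA A) hB mulmx1 hA //.
Qed.

Lemma unitary_adj n (U : 'M[C]_n) : unitary U -> unitary (adjmx U).
Proof. by move=> hU; rewrite /unitary adjmxK unitary_l. Qed.

Lemma unitary_tr n (U : 'M[C]_n) : unitary U -> unitary U^T.
Proof.
move=> hU; rewrite /unitary adjmx_tr -trmx_mul.
by rewrite unitary_l // trmx1.
Qed.

Lemma unitary_perm n (s : 'S_n) : unitary (perm_mx s : 'M[C]_n).
Proof. by rewrite /unitary adjmx_perm -perm_mxM mulgV perm_mx1. Qed.

Lemma char_poly_conj n (U V A : 'M[C]_n) : U *m V = 1%:M ->
  char_poly (U *m A *m V) = char_poly A.
Proof.
move=> UV; rewrite /char_poly /char_poly_mx.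
set f := @polyC C.
have UV' : map_mx f U *m map_mx f V = 1%:M by rewrite -map_mxM UV map_mx1.
have -> : 'X%:M - map_mx f (U *m A *m V) =
          map_mx f U *m ('X%:M - map_mx f A) *m map_mx f V.
  rewrite mulmxBr mulmxBl !map_mxM mul_mx_scalar -scalemxAl UV' scalemx1.
  by [].
by rewrite !det_mulmx mulrAC -det_mulmx UV' det1 mul1r.
Qed.


Definition Hm n (psi : 'M[C]_n) := psi *m adjmx psi.
Definition SP n (psi : 'M[C]_n) := spectralmx (Hm psi).
Definition SD n (psi : 'M[C]_n) := spectral_diag (Hm psi).

Lemma SP_unitary n (psi : 'M[C]_n) : unitary (SP psi).
Proof. by apply/unitaryP; apply: spectral_unitarymx. Qed.

Lemma Hm_adj n (psi : 'M[C]_n) : adjmx (Hm psi) = Hm psi.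
Proof. by rewrite /Hm adjmx_mul adjmxK. Qed.

Lemma Hm_dec n (psi : 'M[C]_n) :
  Hm psi = adjmx (SP psi) *m diag_mx (SD psi) *m SP psi.
Proof.
have /orthomx_spectralP h : Hm psi \is normalmx.
  by apply/normalmxP; rewrite -adjmxE Hm_adj.
rewrite {1}h invmx_unitary ?spectral_unitarymx //.
by rewrite -adjmxE.
Qed.

Lemma SD_diag n (psi : 'M[C]_n) :
  diag_mx (SD psi) = (SP psi *m psi) *m adjmx (SP psi *m psi).
Proof.
have hP := SP_unitary psi.
rewrite adjmx_mul !mulmxA -(mulmxA (SP psi) psi) -/(Hm psi) Hm_dec.
by rewrite !mulmxA hP mul1mx -mulmxA hP mulmx1.
Qed.

Lemma mul_adj_diag m n (X : 'M[C]_(m, n)) i :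
  (X *m adjmx X) i i = \sum_j `|X i j| ^+ 2.
Proof. by rewrite mxE; apply: eq_bigr => j _; rewrite !mxE normCK. Qed.

Lemma SD_ge0 n (psi : 'M[C]_n) i : 0 <= SD psi 0 i.
Proof.
have /matrixP/(_ i i) := SD_diag psi.
rewrite mul_adj_diag !mxE eqxx mulr1n => ->.
by apply: sumr_ge0 => j _; apply: exprn_ge0.
Qed.

Lemma SD_sum n (psi : 'M[C]_n) :
  \sum_i SD psi 0 i = \sum_i \sum_j `|psi i j| ^+ 2.
Proof.
rewrite -mxtrace_diag SD_diag adjmx_mul !mulmxA mxtrace_mulC !mulmxA.
rewrite (unitary_l (SP_unitary psi)) mul1mx /mxtrace.
by apply: eq_bigr => i _; rewrite mul_adj_diag.
Qed.

Lemma SD_neq0 n (psi : 'M[C]_n) i : \rank psi = n -> SD psi 0 i != 0.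
Proof.
move=> rk.
have upsi : psi \in unitmx by rewrite -row_free_unit /row_free rk.
have uP : SP psi \in unitmx by apply/unitarymx_unit/unitaryP/SP_unitary.
have uX : SP psi *m psi \in unitmx by rewrite unitmx_mul uP.
have : diag_mx (SD psi) \in unitmx.
  by rewrite SD_diag unitmx_mul uX adjmxE map_unitmx unitmx_tr.
rewrite unitmxE det_diag unitfE; apply: contraNneq => h.
by rewrite (bigD1 i) //= h mul0r.
Qed.

Lemma char_Hm n (psi : 'M[C]_n) :
  char_poly (Hm psi) = \prod_i ('X - (SD psi 0 i)%:P).
Proof.
rewrite Hm_dec (char_poly_conj _ (unitary_l (SP_unitary psi))).
rewrite char_poly_trig ?diag_mx_is_trig //.
by apply: eq_bigr => i _; rewrite mxE eqxx mulr1n.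
Qed.

Lemma LU_char n (psi phi : 'M[C]_n) :
  LU_equiv psi phi -> char_poly (Hm phi) = char_poly (Hm psi).
Proof.
case=> UA [UB [hA [hB ->]]].
have e : UB^T *m (adjmx UB)^T = 1%:M by rewrite -trmx_mul unitary_l // trmx1.
rewrite /Hm !adjmx_mul adjmx_tr !mulmxA -(mulmxA (UA *m psi)) e mulmx1.
by rewrite -(mulmxA UA) char_poly_conj.
Qed.

Lemma adjmx_tens m n p q (A : 'M[C]_(m, n)) (B : 'M[C]_(p, q)) :
  adjmx (A *t B) = adjmx A *t adjmx B.
Proof. by apply/matrixP => i j; rewrite !mxE rmorphM. Qed.

Lemma tens11 m n : (1%:M : 'M[C]_m) *t (1%:M : 'M[C]_n) = 1%:M.
Proof.
apply/matrixP => i j; case: (mxtens_indexP i) => i1 i2; case: (mxtens_indexP j) => j1 j2.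
rewrite tensmxE !mxE (can_eq (@mxtens_indexK _ _)) xpair_eqE.
by rewrite -natrM mulnb.
Qed.

Lemma tens_diag_trig m n (D : 'rV[C]_m) (E : 'rV[C]_n) :
  is_trig_mx (diag_mx D *t diag_mx E).
Proof.
apply/is_trig_mxP => i j; case: (mxtens_indexP i) => i1 i2.
case: (mxtens_indexP j) => j1 j2 lt.
have : mxtens_index (i1, i2) != mxtens_index (j1, j2).
  by apply: contraTneq lt => ->; rewrite ltnn.
rewrite (can_eq (@mxtens_indexK _ _)) xpair_eqE negb_and => /orP[] h;
  by rewrite tensmxE !mxE (negbTE h) ?mulr0n ?mul0r ?mulr0.
Qed.

Lemma char_tens n (A B : 'M[C]_n) :
  char_poly (Hm (A *t B)) =
  \prod_i \prod_j ('X - (SD A 0 i * SD B 0 j)%:P).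
Proof.
have -> : Hm (A *t B) = (adjmx (SP A) *t adjmx (SP B)) *m
    (diag_mx (SD A) *t diag_mx (SD B)) *m (SP A *t SP B).
  by rewrite /Hm adjmx_tens tensmx_mul -/(Hm A) -/(Hm B) !Hm_dec !tensmx_mul.
have UV : (adjmx (SP A) *t adjmx (SP B)) *m (SP A *t SP B) = 1%:M.
  by rewrite tensmx_mul (unitary_l (SP_unitary A)) (unitary_l (SP_unitary B)) tens11.
rewrite (char_poly_conj _ UV) char_poly_trig ?tens_diag_trig //.
rewrite (reindex (@mxtens_index n n)) /=; last first.
  by exists (@mxtens_unindex n n) => x _; [apply: mxtens_indexK | apply: mxtens_unindexK].
rewrite pair_big /=; apply: eq_bigr => -[i j] _ /=.
by rewrite tensmxE !mxE !eqxx !mulr1n.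
Qed.

Definition G n (psi : 'M[C]_n) := diag_mx (\row_i sqrtC (SD psi 0 i)).
Definition Gi n (psi : 'M[C]_n) := diag_mx (\row_i (sqrtC (SD psi 0 i))^-1).
Definition W n (psi : 'M[C]_n) := Gi psi *m SP psi *m psi.

Lemma G_Gi n (psi : 'M[C]_n) : \rank psi = n -> G psi *m Gi psi = 1%:M.
Proof.
move=> rk; rewrite mulmx_diag -diag_const_mx; congr diag_mx.
apply/rowP => j; rewrite !mxE mulfV // sqrtC_eq0 SD_neq0 //.
Qed.

Lemma W_unitary n (psi : 'M[C]_n) : \rank psi = n -> unitary (W psi).
Proof.
move=> rk; rewrite /unitary /W -mulmxA adjmx_mul !mulmxA.
rewrite -(mulmxA (Gi psi)) -(mulmxA (Gi psi)) -SD_diag /Gi adjmx_diag.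
rewrite !mulmx_diag -diag_const_mx; congr diag_mx.
apply/rowP => j; rewrite !mxE.
set d := SD psi 0 j.
have d0 : 0 <= d by apply: SD_ge0.
have g0 : sqrtC d != 0 by rewrite sqrtC_eq0 SD_neq0.
rewrite geC0_conj; last by rewrite invr_ge0 sqrtC_ge0.
rewrite -{2}(sqrtCK d); field.
by [].
Qed.

Lemma psi_dec n (psi : 'M[C]_n) : \rank psi = n ->
  psi = adjmx (SP psi) *m G psi *m W psi.
Proof.
move=> rk; rewrite /W !mulmxA -(mulmxA _ (G psi)) G_Gi // mulmx1.
by rewrite (unitary_l (SP_unitary psi)) mul1mx.
Qed.

Lemma G_eq n (psi : 'M[C]_n) : \rank psi = n ->
  G psi = SP psi *m psi *m adjmx (W psi).
Proof.
move=> rk.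
have aux : forall P G W X : 'M[C]_n, P *m adjmx P = 1%:M -> W *m adjmx W = 1%:M ->
    X = adjmx P *m G *m W -> G = P *m X *m adjmx W.
  by move=> P G0 W0 X hP hW ->; rewrite !mulmxA hP mul1mx -mulmxA hW mulmx1.
exact: aux (SP_unitary psi) (W_unitary rk) (psi_dec rk).
Qed.

Lemma conv n (psi phi : 'M[C]_n) (s : 'S_n) : \rank psi = n -> \rank phi = n ->
  (forall i, SD phi 0 i = SD psi 0 (s i)) -> LU_equiv psi phi.
Proof.
move=> rk rk' hs.
have eG : G phi = perm_mx s *m G psi *m (perm_mx s)^T.
  rewrite tr_perm_mx -col_permE -row_permE.
  apply/matrixP => i j; rewrite !mxE hs (inj_eq perm_inj) //.
exists (adjmx (SP phi) *m perm_mx s *m SP psi).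
exists ((adjmx (W psi) *m (perm_mx s)^T *m W phi)^T).
split; first by apply: unitary_mul; [apply: unitary_mul; [apply/unitary_adj/SP_unitary|apply: unitary_perm]|apply: SP_unitary].
split.
  apply: unitary_tr; apply: unitary_mul; last exact: W_unitary.
  apply: unitary_mul; first exact/unitary_adj/W_unitary.
  exact/unitary_tr/unitary_perm.
by rewrite trmxK {1}(psi_dec rk') eG (G_eq rk) !mulmxA.
Qed.

End Gen.
Set Implicit Arguments. Unset Strict Implicit. Unset Printing Implicit Defensive.
Import Order.TTheory GRing.Theory Num.Theory.
Local Open Scope ring_scope.

Section Main.
Variable R : realType.
Local Notation C := (R[i]).

Definition ev n (psi : 'M[C]_n) i : R := complex.Re (SD psi 0 i).
Definition La n (psi : 'M[C]_n) : seq R := [seq ev psi i | i <- enum 'I_n].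

Lemma SD_ev n (psi : 'M[C]_n) i : SD psi 0 i = ((ev psi i)%:C)%C.
Proof.
have h := SD_ge0 psi i.
by rewrite [LHS]complexE (ger0_Im h) mulr0 addr0.
Qed.

Lemma ev_gt0 n (psi : 'M[C]_n) i : \rank psi = n -> 0 < ev psi i.
Proof.
move=> rk.
have : ((0:R)%:C < (ev psi i)%:C)%C.
  rewrite -SD_ev lt_def; apply/andP; split; [exact: SD_neq0 | exact: SD_ge0].
by rewrite ltcR.
Qed.

Lemma ev_sum n (psi : 'M[C]_n) : normalized psi -> \sum_(x <- La psi) x = 1.
Proof.
move=> hn; rewrite big_map big_enum /=; apply: (@complexI R).
rewrite rmorph_sum /=.
transitivity (\sum_i SD psi 0 i); first by apply: eq_bigr => i _; rewrite SD_ev.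
by rewrite SD_sum.
Qed.


Lemma perm_LU n (X Y : 'M[C]_n) : \rank X = n -> \rank Y = n ->
  perm_eq (La X) (La Y) -> LU_equiv X Y.
Proof.
move=> rX rY pXY.
have : perm_eq (La Y) [tuple ev X i | i < n] by rewrite perm_sym.
case/tuple_permP => p E.
apply: (conv (s := p)) => // i.
have := congr1 (fun s => nth 0 s i) E.
rewrite /La /= (nth_map i) ?size_enum_ord // nth_ord_enum.
rewrite (nth_map i) ?size_enum_ord // nth_ord_enum => h.
by rewrite !SD_ev h tnth_mktuple.
Qed.

Lemma prod_conv n (A B : 'M[C]_n) :
  \prod_i \prod_j ('X - (SD A 0 i * SD B 0 j)%:P) =
  \prod_(x <- [seq (y%:C)%C | y <- [seq x * y | x <- La A, y <- La B]]) ('X - x%:P).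
Proof.
rewrite big_map big_allpairs_dep /La big_map big_enum /=.
apply: eq_bigr => i _; rewrite big_map big_enum /=.
by apply: eq_bigr => j _; rewrite !SD_ev -rmorphM.
Qed.

End Main.

Unset Implicit Arguments.
Local Open Scope complex_scope.

Theorem mainTheorem11 (R : realType) (d : nat) (hd : (d == 2)%N || (d == 3)%N)
    (mu lam mub lamb : 'M[R[i]]_d) :
  normalized mu -> normalized lam -> normalized mub -> normalized lamb ->
  schmidt_rank mu = d -> schmidt_rank lam = d ->
  schmidt_rank mub = d -> schmidt_rank lamb = d ->
  LU_equiv (tens_state mu lam) (tens_state mub lamb) ->
  (LU_equiv mu mub /\ LU_equiv lam lamb) \/
  (LU_equiv lam mub /\ LU_equiv mu lamb).
Proof.
move=> nmu nlam nmub nlamb rmu rlam rmub rlamb hLU.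
rewrite /schmidt_rank in rmu rlam rmub rlamb.
have hc := LU_char hLU.
rewrite /tens_state !char_tens !prod_conv in hc.
have P2 := perm_map_inj (@complexI R) (prod_XsubC_eq hc).
have P3 : perm_eq [seq x * y | x <- La mu, y <- La lam] [seq x * y | x <- La mub, y <- La lamb].
  by rewrite perm_sym.
have pos : forall X : 'M[R[i]]_d, \rank X = d -> all (fun x => 0 < x) (La X).
  by move=> X rX; apply/allP => x /mapP[i _ ->]; apply: ev_gt0.
have sz : forall X : 'M[R[i]]_d, size (La X) = d by move=> X; rewrite size_map size_enum_ord.
have := core_seq hd (sz mu) (sz lam) (sz mub) (sz lamb) (pos _ rmu) (pos _ rlam)
  (pos _ rmub) (pos _ rlamb) (ev_sum nmu) (ev_sum nlam) (ev_sum nmub) (ev_sum nlamb)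
  P3.
case=> [[h1 h2]|[h1 h2]]; [left|right]; split; exact: perm_LU.
Qed.
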